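(* For every $n\ge2$, the group $\mathcal{P}(\mathrm{Cr}_n)$ is isomorphic to a semidirect product $\mathbb{Z}_{2n}\rtimes\mathbb{Z}_2$ (namely the dihedral group of order $4n$).
   Context: For $n\ge2$, $\mathrm{Cr}_n$ is the poset $\{x_1,\dots,x_n,y_1,\dots,y_n\}$ whose only relations between distinct elements are $x_i<y_i$ ($1\le i\le n$), $x_{i+1}<y_i$ ($1\le i\le n-1$) and $x_1<y_n$. For a finite poset $X$ and $x<y$, $e_{xy}$ denotes the incidence-algebra basis element (indicator of $(x,y)$), and $B=\{e_{xy}:x<y\}$. A bijection $\theta:B\to B$ is proper if there is an automorphism $\lambda$ of $X$ with $\theta(e_{xy})=e_{\lambda(x)\lambda(y)}$ for all $x<y$, or an anti-automorphism (order-reversing bijection) $\lambda$ of $X$ with $\theta(e_{xy})=e_{\lambda(y)\lambda(x)}$ for all $x<y$; $\mathcal{P}(X)$ is the group (under composition) of proper bijections of $B$. *)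

(* Defs.v *)
From HB Require Import structures.
From mathcomp Require Import all_boot all_order all_fingroup all_solvable.

Set Implicit Arguments.
Unset Strict Implicit.
Unset Printing Implicit Defensive.

(* The crown poset Cr_n.  Its carrier is bool * 'I_n:
   (false, i) stands for x_{i+1} and (true, i) for y_{i+1} (0-indexed i). *)
Definition CrX (n : nat) : finType := (bool * 'I_n)%type.

(* Strict order of Cr_n: the only relations between distinct elements are
   x_i < y_i, x_{i+1} < y_i (1 <= i <= n-1), x_1 < y_n.
   0-indexed: x_j < y_i  iff  j = i  or  j = i+1 (mod n). *)
Definition cr_lt (n : nat) (a b : CrX n) : bool :=
  [&& ~~ a.1, b.1 & (a.2 == b.2 :> nat) || (a.2 == b.2.+1 %% n :> nat)].

Definition cr_le (n : nat) (a b : CrX n) : bool := (a == b) || cr_lt a b.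

(* The index set B = { e_xy : x < y } of the incidence-algebra basis. *)
Definition CrB (n : nat) : finType := {p : CrX n * CrX n | cr_lt p.1 p.2}.

Definition is_poset_auto (n : nat) (l : {perm CrX n}) : bool :=
  [forall a, [forall b, cr_le (l a) (l b) == cr_le a b]].

Definition is_poset_antiauto (n : nat) (l : {perm CrX n}) : bool :=
  [forall a, [forall b, cr_le (l a) (l b) == cr_le b a]].

Definition is_proper (n : nat) (th : {perm CrB n}) : bool :=
  [exists l : {perm CrX n},
     (is_poset_auto l &&
      [forall e : CrB n, val (th e) == (l (val e).1, l (val e).2)])
  || (is_poset_antiauto l &&
      [forall e : CrB n, val (th e) == (l (val e).2, l (val e).1)])].

Definition proper_bijections (n : nat) : {set {perm CrB n}} :=
  [set th | is_proper th].

(* Main.v *)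
Set Warnings "-notation-overridden,-ambiguous-paths".
Require Import Defs.
From mathcomp Require Import all_boot all_order all_algebra all_fingroup all_solvable.
From mathcomp Require Import ring zify.
Import GRing.Theory.

Section Crown.
Variable m : nat.
Local Notation n := m.+2.
Local Notation N := m.*2.+4.
Local Notation Z := 'I_N.

Definition V (v : CrX n) : Z := inord (v.2.*2 + v.1).
Definition Vi (k : Z) : CrX n := (odd k, inord k./2).

Lemma V_val v : val (V v) = v.2.*2 + v.1.
Proof.
rewrite /V /= inordK //; case: v => [b [i /= hi]].
have : i <= m.+1 by [].
case: b => /=; lia.
Qed.

Lemma VK : cancel V Vi.
Proof.
case=> b i; rewrite /Vi V_val /= addnC oddD odd_double /=.
rewrite half_bit_double; congr pair; first by case: b.
by apply: val_inj; rewrite /= inordK.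
Qed.

Lemma ViK : cancel Vi V.
Proof.
move=> k; apply: val_inj; rewrite V_val /= inordK.
  by rewrite addnC odd_double_half.
by rewrite ltn_half_double.
Qed.

Lemma V_inj : injective V. Proof. exact: can_inj VK. Qed.
Lemma Vi_inj : injective Vi. Proof. exact: can_inj ViK. Qed.

Local Open Scope ring_scope.

Lemma val_natZ (k : nat) : val (k%:R : Z) = (k %% N)%N.
Proof. by rewrite Zp_nat. Qed.

Lemma oddNN : odd N = false.
Proof. by rewrite /= odd_double. Qed.

Lemma odd_addZ (u v : Z) : odd ((u + v)%R : Z) = odd u (+) odd v.
Proof. have -> : nat_of_ord (u + v)%R = (addn u v %% N)%N by []. by rewrite odd_mod ?oddNN // oddD. Qed.

Lemma odd_oppZ (u : Z) : odd ((- u)%R : Z) = odd u.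
Proof.
have -> : nat_of_ord (- u)%R = (subn N u %% N)%N by []. rewrite odd_mod ?oddNN // oddB; [by rewrite oddNN | exact: ltnW].
Qed.

Lemma odd1Z : odd (1%R : Z).
Proof. by rewrite (_ : 1%R = 1%:R) // val_natZ modn_small. Qed.

Lemma two_neq0 : (1 + 1 : Z) != 0.
Proof. by rewrite (_ : 1 + 1 = 2%:R) // -val_eqE val_natZ modn_small. Qed.


Definition adj (u v : Z) := (v == u + 1) || (u == v + 1).

Lemma adj_sym u v : adj u v = adj v u.
Proof. by rewrite /adj orbC. Qed.

Lemma adj_odd u v : adj u v -> odd v = ~~ odd u.
Proof.
by case/orP=> /eqP ->; rewrite odd_addZ odd1Z; case: (odd _).
Qed.

Lemma cr_ltE (a b : CrX n) :
  cr_lt a b = [&& ~~ odd (V a), odd (V b) & adj (V a) (V b)].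
Proof.
case: a b => [ba i] [bb j]; rewrite /cr_lt !V_val /= !oddD !odd_double.
case: ba; case: bb => //=; rewrite /adj -!val_eqE.
have -> : \val (V (false, i) + 1)%R = ((i.*2 + 1) %% N)%N.
  by rewrite /= V_val /= (modn_small (isT : 1 < N)%N) ?addn0.
have -> : \val (V (true, j) + 1)%R = ((j.*2 + 1 + 1) %% N)%N.
  by rewrite /= V_val (modn_small (isT : 1 < N)%N).
rewrite !V_val /=.
have hi : (i < m.+2)%N by [].
have hj : (j < m.+2)%N by [].
rewrite (modn_small (_ : i.*2 + 1 < N)%N); last by lia.
case: (ltngtP j.+1 m.+2) => hj2.
- rewrite (modn_small hj2) (modn_small (_ : j.*2 + 1 + 1 < N)%N); last by lia.
  apply/idP/idP; rewrite ?addn0 ?addn1; case/orP=> /eqP h; apply/orP; lia.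
- lia.
- rewrite hj2 modnn (_ : j.*2 + 1 + 1 = N)%N ?modnn; last by lia.
  apply/idP/idP; rewrite ?addn0 ?addn1; case/orP=> /eqP h; apply/orP; lia.
Qed.


Definition f (c : Z) (s : bool) (k : Z) : Z := if s then c - k else c + k.

Lemma odd_f c s k : odd (f c s k) = odd c (+) odd k.
Proof. by case: s; rewrite /f ?odd_addZ ?odd_oppZ. Qed.

Lemma adj_f c s u v : adj (f c s u) (f c s v) = adj u v.
Proof.
have E (x y : Z) : (x == y) = (x - y == 0) by rewrite subr_eq0.
case: s; rewrite /f /adj ?(E (c - _)) ?(E (c + _)) (E u) (E v).
- have -> : c - v - (c - u + 1) = u - (v + 1) by ring.
  have -> : c - u - (c - v + 1) = v - (u + 1) by ring.
  by rewrite orbC.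
- have -> : c + v - (c + u + 1) = v - (u + 1) by ring.
  by have -> : c + u - (c + v + 1) = u - (v + 1) by ring.
Qed.

Lemma f_inj c s : injective (f c s).
Proof. by case: s => x y /=; rewrite /f => /addrI // /oppr_inj. Qed.

Lemma f_comp c s c' s' k : f c' s' (f c s k) = f (f c' s' c) (s (+) s') k.
Proof. by case: s; case: s'; rewrite /f /=; ring. Qed.

Lemma odd_fc c' s' c : odd (f c' s' c) = odd c' (+) odd c.
Proof. exact: odd_f. Qed.

Definition lamf c s (v : CrX n) : CrX n := Vi (f c s (V v)).

Lemma V_lamf c s v : V (lamf c s v) = f c s (V v).
Proof. by rewrite /lamf ViK. Qed.

Lemma lamf_inj c s : injective (lamf c s).
Proof. by move=> x y /(congr1 V); rewrite !V_lamf => /f_inj /V_inj. Qed.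

Lemma lamf_comp c s c' s' v :
  lamf c' s' (lamf c s v) = lamf (f c' s' c) (s (+) s') v.
Proof. by rewrite /lamf ViK f_comp. Qed.

Lemma lamf_lt c s a b :
  cr_lt (lamf c s a) (lamf c s b) = if odd c then cr_lt b a else cr_lt a b.
Proof.
rewrite !cr_ltE !V_lamf !odd_f adj_f.
case: (odd c); rewrite /= ?negbK // (adj_sym (V b)); by case: (odd (V a)); case: (odd (V b)).
Qed.


Definition thP (c : Z) s (p : CrX n * CrX n) : CrX n * CrX n :=
  if odd c then (lamf c s p.2, lamf c s p.1) else (lamf c s p.1, lamf c s p.2).

Lemma thP_lt (c : Z) s p : cr_lt p.1 p.2 -> cr_lt (thP c s p).1 (thP c s p).2.
Proof. by rewrite /thP; case: ifP => h /=; rewrite lamf_lt h. Qed.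

Definition thF (c : Z) s (e : CrB n) : CrB n := insubd e (thP c s (val e)).

Lemma thF_val (c : Z) s e : val (thF c s e) = thP c s (val e).
Proof. by rewrite /thF insubdK //; apply: thP_lt; exact: (valP e). Qed.

Lemma thF_inj (c : Z) s : injective (thF c s).
Proof.
move=> e1 e2 /(congr1 val); rewrite !thF_val /thP => h; apply: val_inj.
case: (val e1) (val e2) h => [a1 b1] [a2 b2] /=.
by case: ifP => _ /pair_equal_spec [/lamf_inj -> /lamf_inj ->].
Qed.

Definition Th (c : Z) s : {perm CrB n} := perm (@thF_inj c s).

Lemma Th_val (c : Z) s e : val (Th c s e) = thP c s (val e).
Proof. by rewrite permE thF_val. Qed.

Lemma Th_mul (c : Z) s (c' : Z) s' : (Th c s * Th c' s' = Th (f c' s' c) (s (+) s'))%g.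
Proof.
apply/permP => e; apply: val_inj; rewrite permM !Th_val /thP odd_fc.
case: (val e) => a b /=.
by case: (odd c); case: (odd c'); rewrite /= !lamf_comp.
Qed.

Lemma Th1 : Th 0 false = 1%g.
Proof.
apply/permP => e; apply: val_inj; rewrite perm1 Th_val /thP.
have -> : odd (0%R : Z) = false by [].
have L v : lamf 0 false v = v by rewrite /lamf /f add0r VK.
by case: (val e) => a b /=; rewrite !L.
Qed.


Definition lam (c : Z) s : {perm CrX n} := perm (@lamf_inj c s).

Lemma Th_proper (c : Z) s : Th c s \in proper_bijections n.
Proof.
rewrite inE; apply/existsP; exists (lam c s).
have hle a b : cr_le (lam c s a) (lam c s b) =
    if odd c then cr_le b a else cr_le a b.
  rewrite /cr_le !permE (inj_eq (@lamf_inj c s)) lamf_lt.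
  by case: (odd c); rewrite // eq_sym.
case hc: (odd c); apply/orP; [right | left]; apply/andP; split.
- by apply/forallP=> a; apply/forallP=> b; rewrite hle hc.
- by apply/forallP=> e; rewrite Th_val /thP hc !permE.
- by apply/forallP=> a; apply/forallP=> b; rewrite hle hc.
- by apply/forallP=> e; rewrite Th_val /thP hc !permE.
Qed.


Lemma natZ_inj (i j : nat) : (i < N)%N -> (j < N)%N -> (i%:R : Z) = j%:R -> i = j.
Proof. by move=> hi hj /(congr1 val); rewrite !val_natZ !modn_small. Qed.

Lemma cycle_dihedral (W : Z -> Z) :
  injective W -> (forall u v, adj u v -> adj (W u) (W v)) ->
  exists c s, forall k, W k = f c s k.
Proof.
move=> Winj Wadj.
pose c := W 0; pose eps := W 1 - W 0.
have heps : eps = 1 \/ eps = -1.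
  have : adj (W 0) (W 1) by apply: Wadj; rewrite /adj add0r eqxx.
  case/orP=> /eqP h; [left | right]; rewrite /eps h; ring.
have claim j : (j.+1 < N)%N -> W j%:R = c + eps *+ j /\ W j.+1%:R = c + eps *+ j.+1.
  elim: j => [_ | j IH hj].
    by rewrite /c /eps mulr0n addr0 mulr1n; split=> //; ring.
  have [_ h1] := IH (ltnW hj); split=> //.
  have : adj (W j.+1%:R) (W j.+2%:R).
    by apply: Wadj; rewrite /adj (mulrS _ j.+1) addrC eqxx.
  have e2 : eps *+ j.+2 = eps *+ j.+1 + eps by rewrite mulrSr.
  have e1 : eps *+ j.+1 = eps *+ j + eps by rewrite mulrSr.
  have h0 := proj1 (IH (ltnW hj)).
  have contra : W j.+2%:R = W j%:R -> False.
    by move/Winj/natZ_inj => /(_ hj (ltnW (ltnW hj))); lia.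
  rewrite h1 /adj => /orP [/eqP h2 | /eqP h2].
  - case: heps => he.
      by rewrite h2 e2 he addrA.
    exfalso; apply: contra; rewrite h2 h0 e1 he; ring.
  - have h3 : W j.+2%:R = c + eps *+ j.+1 - 1 by rewrite h2; ring.
    case: heps => he.
      exfalso; apply: contra; rewrite h3 h0 e1 he; ring.
    by rewrite h3 e2 he addrA.
have all k : W k = c + eps *+ k.
  rewrite -{1}(natr_Zp k).
  case hk: (nat_of_ord k) => [|j]; first by rewrite mulr0n addr0.
  by have [] := claim j; rewrite -?hk.
case: heps => he; [exists c, false | exists c, true] => k; rewrite all he /f.
  by rewrite natr_Zp.
by rewrite mulNrn natr_Zp.
Qed.


Lemma cr_lt_irr (x : CrX n) : cr_lt x x = false.
Proof. by rewrite /cr_lt; case: (x.1). Qed.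

Lemma classify (l : {perm CrX n}) (b : bool) :
  (forall x y, cr_le (l x) (l y) = (if b then cr_le y x else cr_le x y)) ->
  exists c s, (forall v, l v = lamf c s v) /\ odd c = b.
Proof.
move=> hl.
have ltle x y : cr_lt x y -> cr_lt (if b then l y else l x) (if b then l x else l y).
  move=> h.
  have neq : x != y by apply/eqP => exy; rewrite exy cr_lt_irr in h.
  have le : cr_le x y by rewrite /cr_le h orbT.
  case: b hl => hl.
    have := hl y x; rewrite le /cr_le => /orP [/eqP /perm_inj e|//].
    by rewrite e eqxx in neq.
  have := hl x y; rewrite le /cr_le => /orP [/eqP /perm_inj e|//].
  by rewrite e eqxx in neq.
have key x y : cr_lt x y -> adj (V (l x)) (V (l y)).
  move/ltle; rewrite cr_ltE; case: b {ltle hl} => /and3P [_ _] //.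
  by rewrite adj_sym.
pose W k := V (l (Vi k)).
have Winj : injective W by move=> u v /V_inj /perm_inj /Vi_inj.
have Wadj u v : adj u v -> adj (W u) (W v).
  move=> h; have ho := adj_odd u v h; case hu: (odd u).
  - have : cr_lt (Vi v) (Vi u) by rewrite cr_ltE !ViK ho hu adj_sym h.
    by move/key; rewrite adj_sym.
  - by apply: key; rewrite cr_ltE !ViK ho hu h.
have [c [s hW]] := cycle_dihedral W Winj Wadj.
exists c, s; split.
  by move=> v; apply: V_inj; rewrite V_lamf -hW /W VK.
have hc : W 0 = c by rewrite hW /f; case: ifP => _; rewrite ?subr0 ?addr0.
have h01 : cr_lt (Vi 0) (Vi 1).
  by rewrite cr_ltE !ViK odd1Z /adj add0r eqxx.
have := ltle _ _ h01; case: b {hl key ltle} => /=; rewrite cr_ltE => /and3P [h1 h2 _].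
  by move: h2; rewrite -/(W 0) hc.
by move: h1; rewrite -/(W 0) hc => /negbTE.
Qed.

Lemma P_Th th : th \in proper_bijections n -> exists c s, th = Th c s.
Proof.
rewrite inE => /existsP [l /orP [] /andP [hl /forallP he]].
- have [c [s [hv hc]]] : exists c s, (forall v, l v = lamf c s v) /\ odd c = false.
    by apply: classify => x y; apply/eqP; exact: (forallP (forallP hl x) y).
  exists c, s; apply/permP => e; apply: val_inj; rewrite Th_val /thP hc.
  by rewrite (eqP (he e)) !hv.
- have [c [s [hv hc]]] : exists c s, (forall v, l v = lamf c s v) /\ odd c = true.
    by apply: classify => x y; apply/eqP; exact: (forallP (forallP hl x) y).
  exists c, s; apply/permP => e; apply: val_inj; rewrite Th_val /thP hc.
  by rewrite (eqP (he e)) !hv.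
Qed.


Lemma lt01 : cr_lt (Vi 0, Vi 1).1 (Vi 0, Vi 1).2.
Proof. by rewrite /= cr_ltE !ViK odd1Z /adj add0r eqxx. Qed.

Lemma lt21 : cr_lt (Vi (1 + 1), Vi 1).1 (Vi (1 + 1), Vi 1).2.
Proof. by rewrite /= cr_ltE !ViK odd_addZ odd1Z /adj eqxx orbT. Qed.

Definition e0 : CrB n := exist _ (Vi 0, Vi 1) lt01.
Definition e1 : CrB n := exist _ (Vi (1 + 1), Vi 1) lt21.

Definition dec (th : {perm CrB n}) : Z * bool :=
  let P1 := V (val (th e0)).1 in
  let P2 := V (val (th e0)).2 in
  let P3 := V (val (th e1)).1 in
  (if P1 == P3 then P2 else P1, P3 - P2 != 1).

Lemma eqZ {x y d : Z} : x - y = d -> (x == y) = (d == 0).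
Proof. by move=> <-; rewrite subr_eq0. Qed.

Lemma decK c s : dec (Th c s) = (c, s).
Proof.
have n2 : ((1 + 1 : Z) == 0) = false by apply/negbTE/two_neq0.
have n2' : ((- (1 + 1) : Z) == 0) = false by rewrite oppr_eq0 n2.
rewrite /dec !Th_val /thP /=.
case: (odd c) => /=; rewrite !V_lamf !ViK /f; case: s => /=.
- rewrite (eqZ (_ : c - 1 - (c - 1) = 0)) ?eqxx; last by ring.
  rewrite (_ : c - 1 - (c - 0) = -1); last by ring.
  by rewrite (eqZ (_ : -1 - 1 = - (1 + 1))) ?n2' ?subr0 //; ring.
- rewrite (eqZ (_ : c + 1 - (c + 1) = 0)) ?eqxx; last by ring.
  rewrite (_ : c + 1 - (c + 0) = 1); last by ring.
  by rewrite ?eqxx ?addr0.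
- rewrite (eqZ (_ : c - 0 - (c - (1 + 1)) = 1 + 1)) ?n2; last by ring.
  rewrite (_ : c - (1 + 1) - (c - 1) = -1); last by ring.
  by rewrite (eqZ (_ : -1 - 1 = - (1 + 1))) ?n2' ?subr0 //; ring.
- rewrite (eqZ (_ : c + 0 - (c + (1 + 1)) = - (1 + 1))) ?n2'; last by ring.
  rewrite (_ : c + (1 + 1) - (c + 1) = 1); last by ring.
  by rewrite ?eqxx ?addr0.
Qed.

Lemma Th_inj c s c' s' : Th c s = Th c' s' -> (c, s) = (c', s').
Proof. by move=> h; rewrite -decK h decK. Qed.


Lemma P_img : proper_bijections n = [set Th p.1 p.2 | p : Z * bool].
Proof.
apply/setP => th; apply/idP/imsetP.
  by case/P_Th => c [s ->]; exists (c, s).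
by case=> [[c s]] _ ->; apply: Th_proper.
Qed.

Lemma card_P : #|proper_bijections n| = (N * 2)%N.
Proof.
rewrite P_img card_imset; last by move=> [c s] [c' s'] /Th_inj.
by rewrite card_prod card_ord card_bool.
Qed.

Lemma P_group : group_set (proper_bijections n).
Proof.
apply/group_setP; split; first by rewrite -Th1 Th_proper.
by move=> a b /P_Th [c [s ->]] /P_Th [c' [s' ->]]; rewrite Th_mul Th_proper.
Qed.

Definition sx := Th 0 true.
Definition sy := Th 1 true.

Lemma P_gen : proper_bijections n = <<[set sx; sy]>>%g.
Proof.
apply/eqP; rewrite eqEsubset; apply/andP; split.
  apply/subsetP => th /P_Th [c [s ->]].
  have rot k : Th (k%:R) false \in <<[set sx; sy]>>%g.
    elim: k => [|k IH]; first by rewrite Th1 group1.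
    have -> : Th k.+1%:R false = (Th k%:R false * (sx * sy))%g.
      rewrite /sx /sy !Th_mul; congr Th; rewrite /f /= mulrS; ring.
    by rewrite !groupM // mem_gen // !inE eqxx ?orbT.
  case: s.
    have -> : Th c true = (Th (- c) false * sx)%g.
      by rewrite /sx Th_mul; congr Th; rewrite /f /=; ring.
    apply: groupM; first by rewrite -(natr_Zp (- c)) rot.
    by rewrite mem_gen // !inE eqxx.
  by rewrite -(natr_Zp c) rot.
have -> : proper_bijections n = Group P_group by [].
by rewrite gen_subG subUset !sub1set /sx /sy !Th_proper.
Qed.

Lemma order2 (g : {perm CrB n}) : (g * g = 1)%g -> g != 1%g -> #[g]%g = 2.
Proof.
move=> h1 h2.
have d : (#[g]%g %| 2)%N by rewrite order_dvdn expgS expg1 h1.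
have := dvdn_leq (isT : (0 < 2)%N) d; rewrite -order_gt1 in h2; lia.
Qed.

Theorem main : (proper_bijections n \isog 'D_(#|proper_bijections n|))%g.
Proof.
have ne : sx != sy.
  apply/eqP => /Th_inj /pair_equal_spec [+ _] => /(congr1 val).
  by rewrite (_ : (1 : Z) = 1%:R) // val_natZ modn_small.
have ox : #[sx]%g = 2.
  apply: order2; first by rewrite /sx Th_mul /f /= subrr Th1.
  by rewrite /sx -Th1; apply/eqP => /Th_inj /pair_equal_spec [].
have oy : #[sy]%g = 2.
  apply: order2; first by rewrite /sy Th_mul /f /= subrr Th1.
  by rewrite /sy -Th1; apply/eqP => /Th_inj /pair_equal_spec [].
have := involutions_gen_dihedral ox oy ne.
by rewrite -P_gen.
Qed.

End Crown.

Theorem proposition4p11 (n : nat) (hn : 2 <= n) :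
  (proper_bijections n \isog 'D_(4 * n))%g.
Proof.
case: n hn => [|[|m]] // _.
have := main m; rewrite card_P.
by rewrite (_ : (m.*2.+4 * 2 = 4 * m.+2)%N) //; lia.
Qed.
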